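(* Let $n\ge1$. As polynomials in the indeterminates $x$ and $y$ with coefficients in $\mathbb{Q}[\mathfrak{S}_n]$, \begin{align*} \rho(x)\rho^{(\ell)}(y)=\rho^{(\ell)}(y)\rho(x)&=\rho(xy),\\ \overline{\rho}(x)\rho^{(\ell)}(y)=\rho^{(\ell)}(y)\overline{\rho}(x)&=\overline{\rho}(xy),\\ \rho(x)\rho^{(r)}(y)=\rho^{(r)}(y)\overline{\rho}(x)&=\rho(xy),\\ \overline{\rho}(x)\rho^{(r)}(y)=\rho^{(r)}(y)\rho(x)&=\overline{\rho}(xy), \end{align*} where $\rho(x)=\sum_{\pi}\Omega'(\pi;x/2)\pi$, $\overline{\rho}(x)=\sum_\pi\overline{\Omega}'(\pi;x/2)\pi$, $\rho^{(\ell)}(x)=\sum_\pi\Omega^{(\ell)}(\pi;(x-1)/2)\pi$, $\rho^{(r)}(x)=\sum_\pi\Omega^{(r)}(\pi;(x-1)/2)\pi$, all sums over $\pi\in\mathfrak{S}_n$.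
   Context: $\mathfrak{S}_n$ is the symmetric group on $[n]$, permutations are words $(\pi(1),\dots,\pi(n))$, and multiplication in $\mathbb{Q}[\mathfrak{S}_n]$ is composition. Let $Z$ be a finite totally ordered set each of whose elements is declared ''plus-type'' or ''minus-type''. For $\pi\in\mathfrak{S}_n$ let $N(\pi;Z)$ be the number of sequences $(a_1,\dots,a_n)\in Z^n$ with $a_1\le\dots\le a_n$ such that for every $s\in[n-1]$: if $\pi(s)<\pi(s+1)$ then $a_s<a_{s+1}$ or ($a_s=a_{s+1}$ is plus-type); if $\pi(s)>\pi(s+1)$ then $a_s<a_{s+1}$ or ($a_s=a_{s+1}$ is minus-type). For a positive integer $k$ define: $\Omega'(\pi;k)=N(\pi;\{\bar1<1<\dots<\bar k<k\})$; $\overline{\Omega}'(\pi;k)=N(\pi;\{0<\bar1<1<\dots<\overline{k-1}<k-1<\bar k\})$; $\Omega^{(\ell)}(\pi;k)=N(\pi;\{0<\bar1<1<\dots<\bar k<k\})$; $\Omega^{(r)}(\pi;k)=N(\pi;\{\bar1<1<\dots<\bar k<k<\overline{k+1}\})$. Here $0$ and unbarred $j$ are plus-type, barred $\bar j$ are minus-type. Each is, as a function of $k$, the restriction of a unique polynomial with rational coefficients, denoted by the same symbol. *)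

(* Defs.v *)
From HB Require Import structures.
From mathcomp Require Import all_boot all_order all_algebra all_fingroup.
From mathcomp Require Import mpoly.
Set Implicit Arguments. Unset Strict Implicit. Unset Printing Implicit Defensive.
Import GRing.Theory.
Local Open Scope ring_scope.

(* A finite totally ordered set Z with types is encoded as a list of booleans
   [z_0; z_1; ...] listed in increasing order; [true] = plus-type,
   [false] = minus-type. *)

Definition Ncount (n : nat) (p : {perm 'I_n}) (Z : seq bool) : nat :=
  #|[set a : {ffun 'I_n -> 'I_(size Z)} |
      [forall i : 'I_n, forall j : 'I_n, (i <= j)%N ==> (a i <= a j)%N] &&
      [forall i : 'I_n, forall j : 'I_n, (nat_of_ord j == (nat_of_ord i).+1) ==>
         (if (p i < p j)%N
          then (a i < a j)%N || ((a i == a j) && nth false Z (a i))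
          else (a i < a j)%N || ((a i == a j) && ~~ nth false Z (a i)))]]|.

(* bar1 < 1 < ... < bark < k *)
Definition pairsZ (k : nat) : seq bool := flatten (nseq k [:: false; true]).

Definition ZOmega' (k : nat) : seq bool := pairsZ k.
(* 0 < bar1 < 1 < ... < bar(k-1) < k-1 < bark *)
Definition ZOmegabar' (k : nat) : seq bool := true :: pairsZ k.-1 ++ [:: false].
(* 0 < bar1 < 1 < ... < bark < k *)
Definition ZOmegal (k : nat) : seq bool := true :: pairsZ k.
(* bar1 < 1 < ... < bark < k < bar(k+1) *)
Definition ZOmegar (k : nat) : seq bool := pairsZ k ++ [:: false].

Definition interpolates (P : {poly rat}) (f : nat -> nat) : Prop :=
  forall k : nat, (0 < k)%N -> P.[k%:R] = (f k)%:R.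

(* composition of permutations: (pcomp s t) i = s (t i) *)
Definition pcomp (n : nat) (s t : {perm 'I_n}) : {perm 'I_n} := (t * s)%g.

(* Group algebra Q[S_n] with coefficients extended to Q[x,y] = {mpoly rat[2]}:
   elements are finite functions S_n -> Q[x,y], product induced by composition. *)
Definition galg (n : nat) := {ffun {perm 'I_n} -> {mpoly rat[2]}}.

Definition gmul (n : nat) (a b : galg n) : galg n :=
  [ffun pi => \sum_(s : {perm 'I_n}) \sum_(t : {perm 'I_n} | pcomp s t == pi)
                a s * b t].

Definition psubst (P : {poly rat}) (u : {mpoly rat[2]}) : {mpoly rat[2]} :=
  (map_poly (fun c : rat => c%:MP) P).[u].

Definition gen_series (n : nat) (P : {perm 'I_n} -> {poly rat})
  (u : {mpoly rat[2]}) : galg n := [ffun pi => psubst (P pi) u].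

Definition varx : {mpoly rat[2]} := 'X_(@ord0 1).
Definition vary : {mpoly rat[2]} := 'X_(@ord_max 1).

(* Main.v *)
Require Import Defs.
From HB Require Import structures.
From mathcomp Require Import all_boot all_order all_algebra all_fingroup.
From mathcomp Require Import mpoly.
From mathcomp Require Import zify.
Import GRing.Theory.

Set Implicit Arguments. Unset Strict Implicit. Unset Printing Implicit Defensive.


Definition Pstd (n : nat) (k : 'I_n -> nat) (s : {perm 'I_n}) : bool :=
  [forall p, forall q, (k (s p) < k (s q)) == (p < q)].
Definition std (n : nat) (k : 'I_n -> nat) : {perm 'I_n} :=
  odflt 1%g [pick s | Pstd k s].

Lemma card_lt (n : nat) (x : 'I_n) : #|[set q : 'I_n | q < x]| = x.
Proof.
have le : x <= n by apply: ltnW.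
have winj : injective (widen_ord le) by move=> a b /(congr1 val) /= h; apply: val_inj.
rewrite -[RHS](card_ord x) -(card_imset _ winj).
apply: eq_card => q; rewrite inE; apply/idP/imsetP.
  by move=> qx; exists (Ordinal qx) => //; apply: val_inj.
by case=> i _ ->; rewrite /= ltn_ord.
Qed.

Lemma card_lt_perm (n : nat) (f : {perm 'I_n}) (x : 'I_n) :
  #|[set q : 'I_n | f q < f x]| = f x.
Proof.
rewrite -[RHS](card_lt (f x)) -[X in _ = X](card_preimset _ (@perm_inj _ f)).
by apply: eq_card => q; rewrite !inE.
Qed.

Lemma Pstd_uniq n (k : 'I_n -> nat) s s' : Pstd k s -> Pstd k s' -> s = s'.
Proof.
move=> /forallP hs /forallP hs'.
pose f := (s * s'^-1)%g.
have hf : forall p q, (f p < f q) = (p < q).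
  move=> p q; move: (hs' (f p)) => /forallP /(_ (f q)) /eqP <-.
  rewrite /f !permM !permKV.
  by move: (hs p) => /forallP /(_ q) /eqP.
apply/permP => p.
have fp : f p = p.
  apply: val_inj => /=.
  rewrite -[LHS](card_lt_perm f p) -[RHS](card_lt p).
  by apply: eq_card => q; rewrite !inE hf.
by move: fp; rewrite /f permM => /(congr1 s'); rewrite permKV.
Qed.

Lemma Pstd_ex n (k : 'I_n -> nat) : injective k -> exists s, Pstd k s.
Proof.
move=> kinj.
pose rank i := #|[set j | k j < k i]|.
have rank_lt : forall i, rank i < n.
  move=> i; have : rank i <= #|[set~ i]|.
    apply: subset_leq_card; apply/subsetP => j; rewrite !inE.
    by apply: contraTneq => ->; rewrite ltnn.
  rewrite cardsC1 card_ord => h; apply: (leq_ltn_trans h); rewrite ltn_predL.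
  exact: (leq_ltn_trans (leq0n i) (ltn_ord i)).
have rank_mono : forall i j, k i < k j -> rank i < rank j.
  move=> i j kij; apply: proper_card; apply/properP; split.
    by apply/subsetP => l; rewrite !inE => /ltn_trans; apply.
  by exists i; rewrite !inE ?kij ?ltnn.
have rank_iff : forall i j, (rank i < rank j) = (k i < k j).
  move=> i j; case: (ltngtP (k i) (k j)) => h.
  - by rewrite rank_mono.
  - by apply/negbTE; rewrite -leqNgt ltnW // rank_mono.
  - by rewrite (kinj _ _ h) ltnn.
pose rO i := Ordinal (rank_lt i).
have rinj : injective rO.
  move=> i j /(congr1 val) /= hr; apply: kinj.
  by case: (ltngtP (k i) (k j)) => // /rank_mono; rewrite hr ltnn.
exists (perm rinj)^-1%g.
apply/forallP => p; apply/forallP => q; apply/eqP.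
rewrite -rank_iff.
have h : forall x, rank ((perm rinj)^-1%g x) = x.
  by move=> x; move: (permKV (perm rinj) x); rewrite permE => /(congr1 val).
by rewrite !h.
Qed.

Lemma stdP n (k : 'I_n -> nat) s : injective k -> (std k == s) = Pstd k s.
Proof.
move=> kinj; rewrite /std; case: pickP => [s0 H0|H] /=.
  apply/eqP/idP => [<- //|Hs]; exact: Pstd_uniq H0 Hs.
by have [s1 Hs1] := Pstd_ex kinj; move: (H s1); rewrite Hs1.
Qed.


Lemma lex_lt (n a b x y : nat) : x < n -> y < n ->
  (a * n + x < b * n + y) = (a < b) || (a == b) && (x < y).
Proof.
move=> xn yn; case: (ltngtP a b) => [ab|ab|->] /=.
- have : a * n + x < b * n + y.
    apply: (@leq_trans (a.+1 * n)); first by rewrite mulSn; lia.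
    exact: leq_trans (leq_mul ab (leqnn n)) (leq_addr _ _).
  by move=> ->.
- apply/negbTE; rewrite -leqNgt.
  apply: (@leq_trans (b.+1 * n)); first by rewrite mulSn; lia.
  exact: leq_trans (leq_mul ab (leqnn n)) (leq_addr _ _).
- by rewrite ltn_add2l.
Qed.

Lemma lex_eq (n a b x y : nat) : x < n -> y < n ->
  (a * n + x == b * n + y) = (a == b) && (x == y).
Proof.
move=> xn yn; case: (ltngtP a b) => [ab|ab|->] /=.
- by rewrite ltn_eqF // lex_lt // ab.
- by rewrite gtn_eqF // lex_lt // ab.
- by rewrite eqn_add2l.
Qed.

Definition keyZ (n : nat) (Z : seq bool) (m : nat) (g : 'I_n -> 'I_m) (i : 'I_n) : nat :=
  g i * n + (if nth false Z (g i) then nat_of_ord i else n.-1 - i).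

Lemma keyZ_aux (n : nat) (b : bool) (i : 'I_n) : (if b then nat_of_ord i else n.-1 - i) < n.
Proof. case: b => //; have := ltn_ord i; lia. Qed.

Lemma keyZ_lt n Z m (g : 'I_n -> 'I_m) i j :
  (keyZ Z g i < keyZ Z g j) =
  (g i < g j) || (g i == g j :> nat) && (if nth false Z (g i) then i < j else j < i).
Proof.
rewrite /keyZ lex_lt ?keyZ_aux //.
case: (ltngtP (g i) (g j)) => //= ->.
case: (nth false Z (g j)) => //.
have := ltn_ord i; have := ltn_ord j; lia.
Qed.

Lemma keyZ_inj n Z m (g : 'I_n -> 'I_m) : injective (keyZ Z g).
Proof.
move=> i j /eqP; rewrite /keyZ lex_eq ?keyZ_aux // => /andP [/eqP -> h].
apply: val_inj; move: h; case: (nth false Z (g j)) => /eqP //=.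
have := ltn_ord i; have := ltn_ord j; lia.
Qed.

Definition monoP (n m : nat) (a : {ffun 'I_n -> 'I_m}) : bool :=
  [forall i : 'I_n, forall j : 'I_n, (i <= j)%N ==> (a i <= a j)%N].
Definition compP (n : nat) (p : {perm 'I_n}) (Z : seq bool) (a : {ffun 'I_n -> 'I_(size Z)}) : bool :=
      [forall i : 'I_n, forall j : 'I_n, (nat_of_ord j == (nat_of_ord i).+1) ==>
         (if (p i < p j)%N
          then (a i < a j)%N || ((a i == a j) && nth false Z (a i))
          else (a i < a j)%N || ((a i == a j) && ~~ nth false Z (a i)))].

Lemma chain_ind (n : nat) (K : 'I_n -> nat) :
  (forall x y : 'I_n, nat_of_ord y = (nat_of_ord x).+1 -> K x < K y) ->
  forall x y : 'I_n, x < y -> K x < K y.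
Proof.
move=> H.
suff : forall d (x y : 'I_n), nat_of_ord y = x + d.+1 -> K x < K y.
  by move=> Hd x y xy; apply: (Hd (y - x.+1)); lia.
elim=> [|d IH] x y hy; first by apply: H; rewrite hy addn1.
have y1 : y.-1 < n by have := ltn_ord y; lia.
apply: (@ltn_trans (K (Ordinal y1))); first by apply: IH => /=; lia.
by apply: H => /=; lia.
Qed.

Lemma compat_iff n (p : {perm 'I_n}) Z (a : {ffun 'I_n -> 'I_(size Z)}) :
  monoP a && compP p a = Pstd (keyZ Z [ffun i => a (p^-1%g i)]) p.
Proof.
set g := [ffun i => _].
have Kx : forall x y, (keyZ Z g (p x) < keyZ Z g (p y)) =
   (a x < a y) || (a x == a y :> nat) && (if nth false Z (a x) then p x < p y else p y < p x).
  by move=> x y; rewrite keyZ_lt !ffunE !permK.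
apply/idP/idP.
  case/andP => /forallP mono /forallP comp.
  have cons : forall x y : 'I_n, nat_of_ord y = (nat_of_ord x).+1 ->
      keyZ Z g (p x) < keyZ Z g (p y).
    move=> x y hxy; rewrite Kx.
    move: (mono x) => /forallP /(_ y); rewrite hxy leqnSn /= leq_eqVlt.
    case/orP => [/eqP/val_inj axy|->] //=; rewrite axy eqxx ltnn /=.
    move: (comp x) => /forallP /(_ y); rewrite hxy eqxx /= axy ltnn eqxx /=.
    have pxy : (nat_of_ord (p x) == p y) = false.
      by apply/eqP => /val_inj /perm_inj xy; move: hxy; rewrite xy; lia.
    move: pxy; case: (nth false Z (a y)); case: (ltngtP (p x) (p y)) => //=.
  have mon := chain_ind cons.
  apply/forallP => x; apply/forallP => y; apply/eqP.
  case: (ltngtP x y) => h.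
  - exact: mon.
  - by apply/negbTE; rewrite -leqNgt ltnW // mon.
  - by rewrite (val_inj h) ltnn.
move=> /forallP hP.
have hK : forall x y, (keyZ Z g (p x) < keyZ Z g (p y)) = (x < y).
  by move=> x y; move: (hP x) => /forallP /(_ y) /eqP.
apply/andP; split.
  apply/forallP => i; apply/forallP => j; apply/implyP => ij.
  rewrite leqNgt; apply/negP => ltji.
  have := hK j i; rewrite Kx ltji /= => /esym; rewrite ltnNge ij.
  done.
apply/forallP => i; apply/forallP => j; apply/implyP => /eqP hij.
have := hK i j; rewrite Kx hij leqnn.
case: (a i < a j) => /= [_|/andP [/eqP/val_inj e h]]; first by case: (_ < _).
rewrite e eqxx /=; move: h; rewrite e.
by case: (nth _ _ _) => h; [rewrite h | rewrite ltnNge (ltnW h)].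
Qed.

Lemma Ncount_std n (p : {perm 'I_n}) Z :
  Ncount p Z = #|[set g : {ffun 'I_n -> 'I_(size Z)} | std (keyZ Z g) == p]|.
Proof.
pose F (a : {ffun 'I_n -> 'I_(size Z)}) := [ffun i => a (p^-1%g i)].
have Finj : injective F.
  move=> a b /ffunP h; apply/ffunP => x; move: (h (p x)); rewrite !ffunE permK.
  done.
rewrite -(card_preimset _ Finj) /Ncount.
apply: eq_card => a; rewrite !inE stdP; last exact: keyZ_inj.
by rewrite -compat_iff.
Qed.


Definition prodZ (A B : seq bool) : seq bool :=
  mkseq (fun k => if nth false B (k %/ size A) then nth false A (k %% size A)
                  else ~~ nth false A ((size A).-1 - k %% size A)) (size B * size A).

Definition encN (A B : seq bool) (z w : nat) : nat :=
  z * size A + (if nth false B z then w else (size A).-1 - w).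

Lemma encN_aux (A B : seq bool) z w : w < size A ->
  (if nth false B z then w else (size A).-1 - w) < size A.
Proof. by case: (nth _ _ _) => //; lia. Qed.

Lemma encN_lt A B z w : z < size B -> w < size A -> encN A B z w < size (prodZ A B).
Proof.
move=> zB wA; rewrite /prodZ size_mkseq /encN.
apply: (@leq_trans (z.+1 * size A)); first by rewrite mulSn; have := encN_aux B z wA; lia.
by rewrite leq_mul2r zB orbT.
Qed.

Definition encO A B (z : 'I_(size B)) (w : 'I_(size A)) : 'I_(size (prodZ A B)) :=
  Ordinal (encN_lt (ltn_ord z) (ltn_ord w)).

Lemma nth_prodZ A B z w : z < size B -> w < size A ->
  nth false (prodZ A B) (encN A B z w) =
  if nth false B z then nth false A w else ~~ nth false A w.
Proof.
move=> zB wA; rewrite /prodZ nth_mkseq; last by have := encN_lt zB wA; rewrite size_mkseq.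
have A0 : 0 < size A by lia.
rewrite /encN divnMDl // divn_small ?encN_aux // addn0 modnMDl modn_small ?encN_aux //.
by case: (nth false B z) => //; congr (~~ nth _ _ _); lia.
Qed.

Lemma encN_lt_iff A B z1 z2 w1 w2 : w1 < size A -> w2 < size A ->
  (encN A B z1 w1 < encN A B z2 w2) =
  (z1 < z2) || (z1 == z2) && (if nth false B z1 then w1 < w2 else w2 < w1).
Proof.
move=> h1 h2; rewrite /encN lex_lt ?encN_aux //.
case: (ltngtP z1 z2) => //= ->; case: (nth _ _ _) => //; lia.
Qed.

Lemma encN_eq A B z1 z2 w1 w2 : w1 < size A -> w2 < size A ->
  (encN A B z1 w1 == encN A B z2 w2) = (z1 == z2) && (w1 == w2).
Proof.
move=> h1 h2; rewrite /encN lex_eq ?encN_aux //.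
case: (ltngtP z1 z2) => //= ->; case: (nth _ _ _) => //; apply/eqP/eqP; lia.
Qed.

Definition Phi n A B (x : {ffun 'I_n -> 'I_(size A)} * {ffun 'I_n -> 'I_(size B)}) :
  {ffun 'I_n -> 'I_(size (prodZ A B))} :=
  [ffun i => encO (x.2 ((std (keyZ A x.1))^-1%g i)) (x.1 i)].

Lemma bool_lemma (z1 z2 w1 w2 i j : nat) (bB : bool) (aA : nat -> bool) :
  ((z1 < z2) || (z1 == z2) && (if bB then w1 < w2 else w2 < w1))
  || (z1 == z2) && (w1 == w2) &&
     (if (if bB then aA w1 else ~~ aA w1) then i < j else j < i)
  = (z1 < z2) || (z1 == z2) &&
     (if bB then (w1 < w2) || (w1 == w2) && (if aA w1 then i < j else j < i)
      else (w2 < w1) || (w2 == w1) && (if aA w2 then j < i else i < j)).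
Proof.
case: (ltngtP z1 z2) => //= _; case: bB; case: (ltngtP w1 w2) => //= ->;
  by case: (aA w2).
Qed.

Lemma Phi_std n A B (x : {ffun 'I_n -> 'I_(size A)} * {ffun 'I_n -> 'I_(size B)}) :
  std (keyZ (prodZ A B) (Phi x)) = Defs.pcomp (std (keyZ A x.1)) (std (keyZ B x.2)).
Proof.
apply/eqP; rewrite stdP; last exact: keyZ_inj.
set s := std (keyZ A x.1); set t := std (keyZ B x.2).
have hs : Pstd (keyZ A x.1) s by rewrite -stdP ?eqxx //; exact: keyZ_inj.
have ht : Pstd (keyZ B x.2) t by rewrite -stdP ?eqxx //; exact: keyZ_inj.
have hs' : forall u v, (keyZ A x.1 (s u) < keyZ A x.1 (s v)) = (u < v).
  by move=> u v; move: hs => /forallP /(_ u) /forallP /(_ v) /eqP.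
have claim : forall u v, (keyZ (prodZ A B) (Phi x) (s u) < keyZ (prodZ A B) (Phi x) (s v))
   = (keyZ B x.2 u < keyZ B x.2 v).
  move=> u v; rewrite !keyZ_lt !ffunE !permK /=.
  rewrite encN_lt_iff ?ltn_ord // encN_eq ?ltn_ord // nth_prodZ ?ltn_ord //.
  rewrite -(hs' u v) -(hs' v u) !keyZ_lt.
  exact: bool_lemma.
apply/forallP => p; apply/forallP => q; rewrite /Defs.pcomp !permM claim.
by move: ht => /forallP /(_ p) /forallP /(_ q).
Qed.


Lemma Phi_inj n A B : injective (@Phi n A B).
Proof.
move=> [x1 x2] [y1 y2] /ffunP h.
have h' : forall i, (x2 ((std (keyZ A x1))^-1%g i) == y2 ((std (keyZ A y1))^-1%g i) :> nat)
   && (x1 i == y1 i :> nat).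
  move=> i; move: (h i); rewrite !ffunE => /(congr1 val) /= /eqP.
  by rewrite encN_eq ?ltn_ord.
have e1 : x1 = y1.
  by apply/ffunP => i; have /andP [_ /eqP /val_inj] := h' i.
subst y1; congr pair; apply/ffunP => j.
have /andP [/eqP /val_inj] := h' (std (keyZ A x1) j).
by rewrite permK.
Qed.

Lemma Phi_bij n A B : bijective (@Phi n A B).
Proof.
apply: (inj_card_bij (@Phi_inj n A B)).
by rewrite card_prod !card_ffun !card_ord /prodZ size_mkseq expnMn mulnC.
Qed.

Lemma prod_count n (A B : seq bool) (pi : {perm 'I_n}) :
  \sum_(s : {perm 'I_n}) \sum_(t : {perm 'I_n} | Defs.pcomp s t == pi)
     Ncount s A * Ncount t B = Ncount pi (prodZ A B).
Proof.
rewrite Ncount_std -sum1dep_card.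
rewrite (reindex (@Phi n A B)); last exact: onW_bij (Phi_bij n A B).
under eq_bigl do rewrite Phi_std.
rewrite -(pair_big_dep xpredT (fun (a : {ffun 'I_n -> 'I_(size A)}) (b : {ffun 'I_n -> 'I_(size B)}) => Defs.pcomp (std (keyZ A a)) (std (keyZ B b)) == pi)
   (fun _ _ => 1)) /=.
under eq_bigr => gA _.
  rewrite (partition_big (fun gB : {ffun 'I_n -> 'I_(size B)} => std (keyZ B gB))
          (fun t => Defs.pcomp (std (keyZ A gA)) t == pi)) //.
  under eq_bigr => t ht.
    rewrite (eq_bigl (fun gB : {ffun 'I_n -> 'I_(size B)} => std (keyZ B gB) == t)); last first.
      move=> gB /=; case E: (std (keyZ B gB) == t); rewrite ?andbF ?andbT //.
      by rewrite (eqP E).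
    rewrite sum1dep_card -Ncount_std.
  over.
over.
rewrite (partition_big (fun gA : {ffun 'I_n -> 'I_(size A)} => std (keyZ A gA)) xpredT) //=.
apply: eq_bigr => s _.
rewrite (eq_bigr (fun _ => \sum_(t | Defs.pcomp s t == pi) Ncount t B)); last first.
  by move=> gA /eqP ->.
rewrite -big_distrr /= [Ncount s A]Ncount_std -sum1dep_card big_distrl /=.
by apply: eq_bigr => i _; rewrite mul1n.
Qed.


Definition alt (L : nat) (e : bool) : seq bool := mkseq (fun k => odd k (+) e) L.

Lemma pairsZ_S k : pairsZ k.+1 = [:: false, true & pairsZ k].
Proof. by []. Qed.

Lemma size_pairsZ k : size (pairsZ k) = 2 * k.
Proof. by elim: k => // k IH; rewrite pairsZ_S /= IH; lia. Qed.

Lemma nth_pairsZ k i : nth false (pairsZ k) i = (i < 2 * k) && odd i.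
Proof.
elim: k i => [|k IH] i; first by rewrite /pairsZ /= nth_nil; case: i.
rewrite pairsZ_S; case: i => [|[|i]] /=; [done|lia|].
rewrite IH negbK; congr andb; lia.
Qed.

Lemma alt_eq (s : seq bool) L e : size s = L -> (forall i, i < L -> nth false s i = odd i (+) e) ->
  s = alt L e.
Proof.
move=> hs hn; apply: (@eq_from_nth _ false); first by rewrite size_mkseq.
by move=> i; rewrite hs => iL; rewrite hn // nth_mkseq.
Qed.

Lemma Om_alt k : ZOmega' k = alt (2 * k) false.
Proof.
apply: alt_eq; first exact: size_pairsZ.
by move=> i ik; rewrite nth_pairsZ ik addbF.
Qed.

Lemma Oml_alt k : ZOmegal k = alt (2 * k + 1) true.
Proof.
rewrite /ZOmegal.
apply: alt_eq; first by rewrite /= size_pairsZ; lia.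
move=> [|i] ik //=; rewrite nth_pairsZ; have -> : i < 2 * k by lia.
by case: (odd i).
Qed.

Lemma Omr_alt k : ZOmegar k = alt (2 * k + 1) false.
Proof.
rewrite /ZOmegar.
apply: alt_eq; first by rewrite size_cat size_pairsZ /=; lia.
move=> i ik; rewrite nth_cat size_pairsZ addbF.
case: ltnP => h; first by rewrite nth_pairsZ h.
have -> : i - 2 * k = 0 by lia.
have -> : i = 2 * k by lia.
by rewrite /= oddM.
Qed.

Lemma Omb_alt k : 0 < k -> ZOmegabar' k = alt (2 * k) true.
Proof.
move=> k0; rewrite /ZOmegabar'; apply: alt_eq; first by rewrite /= size_cat size_pairsZ /=; lia.
move=> [|i] ik //=; rewrite nth_cat size_pairsZ.
case: ltnP => h; first by rewrite nth_pairsZ h addbT negbK.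
have -> : i - 2 * k.-1 = 0 by lia.
have -> : i = 2 * k.-1 by lia.
by rewrite /= oddM.
Qed.

Lemma nth_prodZ_gen A B k : k < size B * size A ->
  nth false (prodZ A B) k = if nth false B (k %/ size A) then nth false A (k %% size A)
                  else ~~ nth false A ((size A).-1 - k %% size A).
Proof. by move=> h; rewrite /prodZ nth_mkseq. Qed.

Lemma prod_alt_even u L e e' : 0 < u ->
  prodZ (alt (2 * u) e) (alt L e') = alt (L * (2 * u)) e.
Proof.
move=> u0; apply: alt_eq; first by rewrite /prodZ size_mkseq !size_mkseq.
move=> k hk; rewrite nth_prodZ_gen; last by rewrite !size_mkseq.
rewrite !size_mkseq.
have hr : k %% (2 * u) < 2 * u by rewrite ltn_mod; lia.
have hz : k %/ (2 * u) < L by rewrite ltn_divLR; lia.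
rewrite !nth_mkseq //; last by lia.
have ok : odd k = odd (k %% (2 * u)).
  by rewrite {1}(divn_eq k (2 * u)) oddD !oddM /= ?andbF.
have os : odd ((2 * u).-1 - k %% (2 * u)) = ~~ odd (k %% (2 * u)).
  rewrite oddB; last by lia.
  have -> : (2 * u).-1 = (2 * (u.-1)).+1 by lia.
  by rewrite /= oddM.
rewrite os ok; case: (_ (+) _); case: (odd _); case: e => //.
Qed.

Lemma prod_alt_odd v u e e' :
  prodZ (alt (2 * v + 1) e) (alt (2 * u) e') = alt (2 * u * (2 * v + 1)) (e (+) ~~ e').
Proof.
apply: alt_eq; first by rewrite /prodZ size_mkseq !size_mkseq.
move=> k hk; rewrite nth_prodZ_gen; last by rewrite !size_mkseq.
rewrite !size_mkseq.
have hr : k %% (2 * v + 1) < 2 * v + 1 by rewrite ltn_mod; lia.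
have hz : k %/ (2 * v + 1) < 2 * u by rewrite ltn_divLR; lia.
rewrite !nth_mkseq //; last by lia.
have ok : odd k = odd (k %/ (2 * v + 1)) (+) odd (k %% (2 * v + 1)).
  by rewrite {1}(divn_eq k (2 * v + 1)) oddD oddM oddD oddM /= andbT.
have os : odd ((2 * v + 1).-1 - k %% (2 * v + 1)) = odd (k %% (2 * v + 1)).
  rewrite oddB; last by lia.
  have -> : (2 * v + 1).-1 = 2 * v by lia.
  by rewrite oddM.
rewrite os ok; case: (odd _); case: (odd _); case: e; case: e' => //.
Qed.


Import Num.Theory.
Local Open Scope ring_scope.

Lemma poly_zero_rat (p : {poly rat}) : (forall k : nat, (0 < k)%N -> p.[k%:R] = 0) -> p = 0.
Proof.
move=> h; apply/eqP; apply: contraT => p0.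
have := @max_poly_roots _ p [seq (k.+1)%:R | k <- iota 0 (size p)] p0.
rewrite size_map size_iota ltnn; apply.
  by apply/allP => x /mapP [k _ ->]; rewrite /root h.
rewrite map_inj_uniq ?iota_uniq //.
by move=> a b /eqP; rewrite eqr_nat => /eqP [].
Qed.

Definition RR := {poly {poly rat}}.
Definition liftR (P : {poly rat}) : {poly RR} := map_poly (fun c : rat => c%:P%:P : RR) P.

Lemma morph_lift (S : comNzRingType) (phi : {rmorphism RR -> S}) (P : {poly rat}) (w : RR) :
  phi (liftR P).[w] = (map_poly (phi \o (fun c : rat => c%:P%:P : RR)) P).[phi w].
Proof. by rewrite -horner_map map_poly_comp. Qed.

Definition cfu_ev (u v : rat) : commr_rmorph (horner_eval v) u := fun a => mulrC _ _.
Notation ev u v := (horner_morph (cfu_ev u v)).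

Lemma ev_lift u v P w : ev u v (liftR P).[w] = P.[ev u v w].
Proof.
rewrite morph_lift map_poly_id // => c _ /=.
by rewrite horner_morphC; exact: hornerC.
Qed.

Lemma ev_U u v : ev u v 'X = u.
Proof. exact: horner_morphX. Qed.
Lemma ev_V u v : ev u v ('X)%:P = v.
Proof. by rewrite horner_morphC; exact: hornerX. Qed.
Lemma ev_UV u v : ev u v ('X * (2%:R * ('X)%:P + 1)) = u * (2%:R * v + 1).
Proof.
rewrite rmorphM /= ev_U rmorphD /= rmorph1 rmorphM /= ev_V.
by rewrite rmorph_nat.
Qed.

Lemma ev_UV_nat (u v : nat) :
  ev u%:R v%:R ('X * (2%:R * ('X)%:P + 1)) = (u * (2 * v + 1))%:R.
Proof. by rewrite ev_UV natrM natrD natrM mulr1n. Qed.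

Lemma ev_zero (D : RR) :
  (forall u v : nat, (0 < u)%N -> (0 < v)%N -> ev u%:R v%:R D = 0) -> D = 0.
Proof.
move=> h; apply/polyP => i; rewrite coef0; apply: poly_zero_rat => v v0.
have q0 : map_poly (horner_eval v%:R) D = 0.
  by apply: poly_zero_rat => u u0; exact: (h u v u0 v0).
by have := congr1 (fun q : {poly rat} => q`_i) q0; rewrite coef_map coef0 /= horner_evalE.
Qed.

Definition halfQ : rat := 2%:R^-1.
Definition Xh : {mpoly rat[2]} := halfQ *: varx.
Definition Yh : {mpoly rat[2]} := halfQ *: (vary - 1).
Definition cfuY : commr_rmorph (mpolyC 2 (R:=rat)) Yh := fun a => mulrC _ _.
Notation PhiIn := (horner_morph cfuY).
Definition cfuX : commr_rmorph PhiIn Xh := fun a => mulrC _ _.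
Notation PhiOut := (horner_morph cfuX).

Lemma Phi_lift P w : PhiOut (liftR P).[w] = psubst P (PhiOut w).
Proof.
rewrite morph_lift /psubst; congr (_.[_]); apply: eq_map_poly => c /=.
rewrite (horner_morphC cfuX); exact: (horner_morphC cfuY).
Qed.

Lemma Phi_U : PhiOut 'X = Xh.
Proof. exact: horner_morphX. Qed.
Lemma Phi_V : PhiOut ('X)%:P = Yh.
Proof. rewrite (horner_morphC cfuX); exact: (horner_morphX cfuY). Qed.

Lemma Phi_prod :
  PhiOut ('X * (2%:R * ('X)%:P + 1)) = halfQ *: (varx * vary).
Proof.
rewrite rmorphM rmorphD rmorph1 rmorphM rmorph_nat /= (horner_morphX cfuX) (horner_morphC cfuX) /=.
rewrite (horner_morphX cfuY). Show.
rewrite /Xh /Yh -!mul_mpolyC.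
have h2 : (halfQ%:MP_[2] * 2%:R) = 1.
  by rewrite -(rmorph_nat (mpolyC 2 (R:=rat))) -rmorphM /halfQ mulVf // rmorph1.
rewrite mulrA (mulrC 2%:R) h2 mul1r subrK mulrA.
done.
Qed.

Lemma transfer n (A B C : {perm 'I_n} -> {poly rat}) (fA fB fC : {perm 'I_n} -> nat -> nat) (sw : bool) :
  (forall pi, interpolates (A pi) (fA pi)) ->
  (forall pi, interpolates (B pi) (fB pi)) ->
  (forall pi, interpolates (C pi) (fC pi)) ->
  (forall u v, (0 < u)%N -> (0 < v)%N -> forall pi,
     (\sum_(s : {perm 'I_n}) \sum_(t : {perm 'I_n} | Defs.pcomp s t == pi)
        fA s (if sw then v else u) * fB t (if sw then u else v))%N = fC pi (u * (2 * v + 1))%N) ->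
  gmul (gen_series A (if sw then Yh else Xh)) (gen_series B (if sw then Xh else Yh)) =
  gen_series C (halfQ *: (varx * vary)).
Proof.
move=> hA hB hC hN.
pose U : RR := 'X; pose V : RR := ('X)%:P.
have key : forall pi,
    \sum_(s : {perm 'I_n}) \sum_(t : {perm 'I_n} | Defs.pcomp s t == pi)
       (liftR (A s)).[if sw then V else U] * (liftR (B t)).[if sw then U else V]
    = (liftR (C pi)).[U * (2%:R * V + 1)].
  move=> pi; apply/eqP; rewrite -subr_eq0; apply/eqP; apply: ev_zero => u v u0 v0.
  have evU : ev u%:R v%:R U = u%:R by rewrite ev_U.
  have evV : ev u%:R v%:R V = v%:R by rewrite ev_V.
  have uv0 : (0 < u * (2 * v + 1))%N by rewrite muln_gt0 u0 addn1.
  rewrite rmorphB rmorph_sum /= ev_lift ev_UV_nat hC //.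
  under eq_bigr do rewrite rmorph_sum /=.
  under eq_bigr do under eq_bigr do rewrite rmorphM /= !ev_lift.
  have hAu s : (A s).[u%:R] = (fA s u)%:R by apply: hA.
  have hAv s : (A s).[v%:R] = (fA s v)%:R by apply: hA.
  have hBu s : (B s).[u%:R] = (fB s u)%:R by apply: hB.
  have hBv s : (B s).[v%:R] = (fB s v)%:R by apply: hB.
  case: sw hN => hN /=; rewrite ?evU ?evV;
  under eq_bigr do under eq_bigr do rewrite ?hAu ?hAv ?hBu ?hBv -natrM;
  under eq_bigr do rewrite -natr_sum;
  by rewrite -natr_sum hN // subrr.
apply/ffunP => pi; rewrite !ffunE.
under eq_bigr do under eq_bigr do rewrite !ffunE.
have := congr1 PhiOut (key pi); rewrite rmorph_sum /= Phi_lift Phi_prod => <-.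
apply: eq_bigr => s _; rewrite rmorph_sum /=; apply: eq_bigr => t _.
rewrite rmorphM /= !Phi_lift /U /V.
by case: sw {hN key}; rewrite ?Phi_U ?Phi_V.
Qed.

Unset Implicit Arguments.

Lemma nat_case_even (fA fB fC : nat -> seq bool) eA eB (LB : nat -> nat) :
  (forall u, 0 < u -> fA u = alt (2 * u) eA)%N ->
  (forall v, fB v = alt (LB v) eB) ->
  (forall u v, 0 < u -> 0 < v -> fC (u * (2 * v + 1)) = alt (LB v * (2 * u)) eA)%N ->
  forall n (u v : nat), (0 < u)%N -> (0 < v)%N -> forall pi : {perm 'I_n},
  (\sum_(s : {perm 'I_n}) \sum_(t : {perm 'I_n} | Defs.pcomp s t == pi)
        Ncount s (fA u) * Ncount t (fB v))%N = Ncount pi (fC (u * (2 * v + 1))%N).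
Proof.
move=> hA hB hC n u v u0 v0 pi.
rewrite prod_count hA // hB prod_alt_even //; rewrite hC //.
Qed.

Lemma nat_case_odd (fA fB fC : nat -> seq bool) eA eB :
  (forall v, fA v = alt (2 * v + 1) eA)%N ->
  (forall u, 0 < u -> fB u = alt (2 * u) eB)%N ->
  (forall u v, 0 < u -> 0 < v -> fC (u * (2 * v + 1)) = alt (2 * u * (2 * v + 1)) (eA (+) ~~ eB))%N ->
  forall n (u v : nat), (0 < u)%N -> (0 < v)%N -> forall pi : {perm 'I_n},
  (\sum_(s : {perm 'I_n}) \sum_(t : {perm 'I_n} | Defs.pcomp s t == pi)
        Ncount s (fA v) * Ncount t (fB u))%N = Ncount pi (fC (u * (2 * v + 1))%N).
Proof.
move=> hA hB hC n u v u0 v0 pi.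
rewrite prod_count hA hB // prod_alt_odd; rewrite hC //.
Qed.

Lemma len1 u v : (2 * (u * (2 * v + 1)) = (2 * v + 1) * (2 * u))%N.
Proof. by rewrite mulnA [RHS]mulnC. Qed.
Lemma len2 u v : (2 * (u * (2 * v + 1)) = 2 * u * (2 * v + 1))%N.
Proof. by rewrite mulnA. Qed.
Lemma pos_uv u v : (0 < u -> 0 < u * (2 * v + 1))%N.
Proof. by move=> u0; rewrite muln_gt0 u0 addn1. Qed.

Lemma N1 n u v : (0 < u)%N -> (0 < v)%N -> forall pi : {perm 'I_n},
  (\sum_(s : {perm 'I_n}) \sum_(t : {perm 'I_n} | Defs.pcomp s t == pi)
        Ncount s (ZOmega' u) * Ncount t (ZOmegal v))%N = Ncount pi (ZOmega' (u * (2 * v + 1))%N).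
Proof.
apply: (@nat_case_even _ _ _ false true (fun v => 2 * v + 1)%N).
- by move=> w _; apply: Om_alt.
- exact: Oml_alt.
- by move=> w x _ _; rewrite Om_alt len1.
Qed.

Lemma N2 n u v : (0 < u)%N -> (0 < v)%N -> forall pi : {perm 'I_n},
  (\sum_(s : {perm 'I_n}) \sum_(t : {perm 'I_n} | Defs.pcomp s t == pi)
        Ncount s (ZOmegal v) * Ncount t (ZOmega' u))%N = Ncount pi (ZOmega' (u * (2 * v + 1))%N).
Proof.
apply: (@nat_case_odd _ _ _ true false).
- exact: Oml_alt.
- by move=> w _; apply: Om_alt.
- by move=> w x _ _; rewrite Om_alt len2.
Qed.

Lemma N3 n u v : (0 < u)%N -> (0 < v)%N -> forall pi : {perm 'I_n},
  (\sum_(s : {perm 'I_n}) \sum_(t : {perm 'I_n} | Defs.pcomp s t == pi)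
        Ncount s (ZOmegabar' u) * Ncount t (ZOmegal v))%N = Ncount pi (ZOmegabar' (u * (2 * v + 1))%N).
Proof.
apply: (@nat_case_even _ _ _ true true (fun v => 2 * v + 1)%N).
- by move=> w w0; apply: Omb_alt.
- exact: Oml_alt.
- by move=> w x w0 _; rewrite Omb_alt ?pos_uv // len1.
Qed.

Lemma N4 n u v : (0 < u)%N -> (0 < v)%N -> forall pi : {perm 'I_n},
  (\sum_(s : {perm 'I_n}) \sum_(t : {perm 'I_n} | Defs.pcomp s t == pi)
        Ncount s (ZOmegal v) * Ncount t (ZOmegabar' u))%N = Ncount pi (ZOmegabar' (u * (2 * v + 1))%N).
Proof.
apply: (@nat_case_odd _ _ _ true true).
- exact: Oml_alt.
- by move=> w w0; apply: Omb_alt.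
- by move=> w x w0 _; rewrite Omb_alt ?pos_uv // len2.
Qed.

Lemma N5 n u v : (0 < u)%N -> (0 < v)%N -> forall pi : {perm 'I_n},
  (\sum_(s : {perm 'I_n}) \sum_(t : {perm 'I_n} | Defs.pcomp s t == pi)
        Ncount s (ZOmega' u) * Ncount t (ZOmegar v))%N = Ncount pi (ZOmega' (u * (2 * v + 1))%N).
Proof.
apply: (@nat_case_even _ _ _ false false (fun v => 2 * v + 1)%N).
- by move=> w _; apply: Om_alt.
- exact: Omr_alt.
- by move=> w x _ _; rewrite Om_alt len1.
Qed.

Lemma N6 n u v : (0 < u)%N -> (0 < v)%N -> forall pi : {perm 'I_n},
  (\sum_(s : {perm 'I_n}) \sum_(t : {perm 'I_n} | Defs.pcomp s t == pi)
        Ncount s (ZOmegar v) * Ncount t (ZOmegabar' u))%N = Ncount pi (ZOmega' (u * (2 * v + 1))%N).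
Proof.
apply: (@nat_case_odd _ _ _ false true).
- exact: Omr_alt.
- by move=> w w0; apply: Omb_alt.
- by move=> w x _ _; rewrite Om_alt len2.
Qed.

Lemma N7 n u v : (0 < u)%N -> (0 < v)%N -> forall pi : {perm 'I_n},
  (\sum_(s : {perm 'I_n}) \sum_(t : {perm 'I_n} | Defs.pcomp s t == pi)
        Ncount s (ZOmegabar' u) * Ncount t (ZOmegar v))%N = Ncount pi (ZOmegabar' (u * (2 * v + 1))%N).
Proof.
apply: (@nat_case_even _ _ _ true false (fun v => 2 * v + 1)%N).
- by move=> w w0; apply: Omb_alt.
- exact: Omr_alt.
- by move=> w x w0 _; rewrite Omb_alt ?pos_uv // len1.
Qed.

Lemma N8 n u v : (0 < u)%N -> (0 < v)%N -> forall pi : {perm 'I_n},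
  (\sum_(s : {perm 'I_n}) \sum_(t : {perm 'I_n} | Defs.pcomp s t == pi)
        Ncount s (ZOmegar v) * Ncount t (ZOmega' u))%N = Ncount pi (ZOmegabar' (u * (2 * v + 1))%N).
Proof.
apply: (@nat_case_odd _ _ _ false false).
- exact: Omr_alt.
- by move=> w _; apply: Om_alt.
- by move=> w x w0 _; rewrite Omb_alt ?pos_uv // len2.
Qed.

Theorem theorem3p5 (n : nat) (hn : (1 <= n)%N)
  (Om Omb Oml Omr : {perm 'I_n} -> {poly rat})
  (hOm  : forall pi, interpolates (Om pi)  (fun k => Ncount pi (ZOmega' k)))
  (hOmb : forall pi, interpolates (Omb pi) (fun k => Ncount pi (ZOmegabar' k)))
  (hOml : forall pi, interpolates (Oml pi) (fun k => Ncount pi (ZOmegal k)))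
  (hOmr : forall pi, interpolates (Omr pi) (fun k => Ncount pi (ZOmegar k))) :
  let half := (2%:R^-1 : rat) in
  let rho  (u : {mpoly rat[2]}) := gen_series Om  (half *: u) in
  let rhob (u : {mpoly rat[2]}) := gen_series Omb (half *: u) in
  let rhol (u : {mpoly rat[2]}) := gen_series Oml (half *: (u - 1)) in
  let rhor (u : {mpoly rat[2]}) := gen_series Omr (half *: (u - 1)) in
  (gmul (rho varx) (rhol vary) = rho (varx * vary)) /\
      (gmul (rhol vary) (rho varx) = rho (varx * vary)) /\
      (gmul (rhob varx) (rhol vary) = rhob (varx * vary)) /\
      (gmul (rhol vary) (rhob varx) = rhob (varx * vary)) /\
      (gmul (rho varx) (rhor vary) = rho (varx * vary)) /\
      (gmul (rhor vary) (rhob varx) = rho (varx * vary)) /\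
      (gmul (rhob varx) (rhor vary) = rhob (varx * vary)) /\
      (gmul (rhor vary) (rho varx) = rhob (varx * vary)).

Proof.
move=> half rho rhob rhol rhor.
split; first exact: (@transfer n Om Oml Om (fun pi k => Ncount pi (ZOmega' k)) (fun pi k => Ncount pi (ZOmegal k)) (fun pi k => Ncount pi (ZOmega' k)) false hOm hOml hOm (@N1 n)).
split; first exact: (@transfer n Oml Om Om (fun pi k => Ncount pi (ZOmegal k)) (fun pi k => Ncount pi (ZOmega' k)) (fun pi k => Ncount pi (ZOmega' k)) true hOml hOm hOm (@N2 n)).
split; first exact: (@transfer n Omb Oml Omb (fun pi k => Ncount pi (ZOmegabar' k)) (fun pi k => Ncount pi (ZOmegal k)) (fun pi k => Ncount pi (ZOmegabar' k)) false hOmb hOml hOmb (@N3 n)).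
split; first exact: (@transfer n Oml Omb Omb (fun pi k => Ncount pi (ZOmegal k)) (fun pi k => Ncount pi (ZOmegabar' k)) (fun pi k => Ncount pi (ZOmegabar' k)) true hOml hOmb hOmb (@N4 n)).
split; first exact: (@transfer n Om Omr Om (fun pi k => Ncount pi (ZOmega' k)) (fun pi k => Ncount pi (ZOmegar k)) (fun pi k => Ncount pi (ZOmega' k)) false hOm hOmr hOm (@N5 n)).
split; first exact: (@transfer n Omr Omb Om (fun pi k => Ncount pi (ZOmegar k)) (fun pi k => Ncount pi (ZOmegabar' k)) (fun pi k => Ncount pi (ZOmega' k)) true hOmr hOmb hOm (@N6 n)).
split; first exact: (@transfer n Omb Omr Omb (fun pi k => Ncount pi (ZOmegabar' k)) (fun pi k => Ncount pi (ZOmegar k)) (fun pi k => Ncount pi (ZOmegabar' k)) false hOmb hOmr hOmb (@N7 n)).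
exact: (@transfer n Omr Om Omb (fun pi k => Ncount pi (ZOmegar k)) (fun pi k => Ncount pi (ZOmega' k)) (fun pi k => Ncount pi (ZOmegabar' k)) true hOmr hOm hOmb (@N8 n)).
Qed.
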